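(* Under the standing setting, if $f_0\in[0,\infty)$ and $f_\infty\in[0,\infty)$, then there exists $\overline\lambda>0$ such that problem (P$_\lambda$) has no positive solution for any $\lambda\in[0,\overline\lambda)$.
   Context: Standing setting. $\varphi:\mathbb{R}\to\mathbb{R}$ is an odd, increasing homeomorphism satisfying condition (A): there exist increasing homeomorphisms $\psi_1,\psi_2:[0,\infty)\to[0,\infty)$ such that $\varphi(x)\psi_1(y)\le \varphi(xy)\le \varphi(x)\psi_2(y)$ for all $x,y\ge 0$. Let $c,d\in C([0,1],(0,\infty))$, and $\|\cdot\|_\infty$ the maximum norm on $C[0,1]$. Let $f\in C([0,\infty),[0,\infty))$ with $f(s)>0$ for $s>0$, and write $f_0=\lim_{s\to0^+}f(s)/\varphi(s)$, $f_\infty=\lim_{s\to\infty}f(s)/\varphi(s)$ (assumed to exist in $[0,\infty]$ whenever referred to). Let $h\in C((0,1),[0,\infty))$, $h\not\equiv 0$, with $\int_0^{1/2}\psi_1^{-1}\big(\int_s^{1/2}h(\tau)d\tau\big)ds+\int_{1/2}^1\psi_1^{-1}\big(\int_{1/2}^s h(\tau)d\tau\big)ds<\infty$. Notation attached to $h$: $\alpha_h=\sup\{x\in(0,1): h=0 \text{ on }(0,x)\}$ ($0$ if empty); $\beta_h=\inf\{x\in(0,1): h=0\text{ on }(x,1)\}$ ($1$ if empty); $\bar\alpha_h=\sup\{x\in(\alpha_h,1]: h>0 \text{ on }(\alpha_h,x)\}$; $\bar\beta_h=\inf\{x\in[0,\beta_h): h>0\text{ on }(x,\beta_h)\}$; $\gamma_h^1=(3\alpha_h+\bar\alpha_h)/4$,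 $\gamma_h^2=(\bar\beta_h+3\beta_h)/4$. It is assumed that $0\le\alpha_h<\gamma_h^1<\gamma_h^2<\beta_h\le 1$. For $\lambda\ge0$, problem (P$_\lambda$) is: $(d(t)\varphi(c(t)u'(t)))'+\lambda h(t)f(u(t))=0$ for $t\in(0,1)$, $u(0)=u(1)=0$. A solution is $u\in C[0,1]\cap C^1(0,1)$ such that $t\mapsto d(t)\varphi(c(t)u'(t))$ is continuously differentiable on $(0,1)$ and the equation and boundary conditions hold; it is positive if $u(t)>0$ for all $t\in(0,1)$. *)

(* Defs.v *)
From Stdlib Require Import Reals Lra ClassicalEpsilon.
Open Scope R_scope.

Definition cont_on (g : R -> R) (P : R -> Prop) : Prop :=
  forall x, P x -> forall eps, 0 < eps ->
    exists delta, 0 < delta /\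
      forall y, P y -> Rabs (y - x) < delta -> Rabs (g y - g x) < eps.

Definition odd_inc_homeo (phi : R -> R) : Prop :=
  (forall x y, x < y -> phi x < phi y) /\
  (forall x, continuity_pt phi x) /\
  (forall y, exists x, phi x = y) /\
  (forall x, phi (- x) = - phi x).

(* Increasing homeomorphism of [0,oo) onto [0,oo) (values off [0,oo) irrelevant).
   Continuity of the inverse is automatic for an increasing bijection of intervals. *)
Definition inc_homeo_nonneg (p : R -> R) : Prop :=
  (forall x, 0 <= x -> 0 <= p x) /\
  (forall x y, 0 <= x -> x < y -> p x < p y) /\
  (forall y, 0 <= y -> exists x, 0 <= x /\ p x = y) /\
  cont_on p (fun x => 0 <= x).

Definition condA (phi psi1 psi2 : R -> R) : Prop :=
  inc_homeo_nonneg psi1 /\ inc_homeo_nonneg psi2 /\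
  forall x y, 0 <= x -> 0 <= y ->
    phi x * psi1 y <= phi (x * y) /\ phi (x * y) <= phi x * psi2 y.

(* Riemann integral as a relation and as a total function (the value is the
   genuine Riemann integral whenever g is Riemann integrable on [a,b]). *)
Definition Rint (g : R -> R) (a b v : R) : Prop :=
  exists pr : Riemann_integrable g a b, RiemannInt pr = v.

Definition integral (g : R -> R) (a b : R) : R :=
  epsilon (inhabits 0) (fun v => Rint g a b v).

(* Finiteness of improper integrals of nonnegative functions,
   singular at the left endpoint / the right endpoint. *)
Definition improper_finite_left (g : R -> R) (a b : R) : Prop :=
  exists M, forall e, a < e <= b -> integral g e b <= M.
Definition improper_finite_right (g : R -> R) (a b : R) : Prop :=
  exists M, forall e, a <= e < b -> integral g a e <= M.

Definition h_integrability (h psi1inv : R -> R) : Prop :=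
  improper_finite_left (fun s => psi1inv (integral h s (1/2))) 0 (1/2) /\
  improper_finite_right (fun s => psi1inv (integral h (1/2) s)) (1/2) 1.

Definition is_glb (S : R -> Prop) (m : R) : Prop :=
  (forall x, S x -> m <= x) /\ (forall m', (forall x, S x -> m' <= x) -> m' <= m).

Definition alpha_set (h : R -> R) (x : R) : Prop :=
  0 < x < 1 /\ forall t, 0 < t < x -> h t = 0.
Definition is_alpha (h : R -> R) (a : R) : Prop :=
  ((exists x, alpha_set h x) /\ is_lub (alpha_set h) a) \/
  ((~ exists x, alpha_set h x) /\ a = 0).

Definition beta_set (h : R -> R) (x : R) : Prop :=
  0 < x < 1 /\ forall t, x < t < 1 -> h t = 0.
Definition is_beta (h : R -> R) (b : R) : Prop :=
  ((exists x, beta_set h x) /\ is_glb (beta_set h) b) \/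
  ((~ exists x, beta_set h x) /\ b = 1).

Definition alphabar_set (h : R -> R) (a x : R) : Prop :=
  a < x <= 1 /\ forall t, a < t < x -> 0 < h t.
Definition is_alphabar (h : R -> R) (a ab : R) : Prop :=
  (exists x, alphabar_set h a x) /\ is_lub (alphabar_set h a) ab.

Definition betabar_set (h : R -> R) (b x : R) : Prop :=
  0 <= x < b /\ forall t, x < t < b -> 0 < h t.
Definition is_betabar (h : R -> R) (b bb : R) : Prop :=
  (exists x, betabar_set h b x) /\ is_glb (betabar_set h b) bb.

(* Standing assumption 0 <= alpha_h < gamma^1_h < gamma^2_h < beta_h <= 1. *)
Definition gamma_condition (h : R -> R) : Prop :=
  exists a b ab bb,
    is_alpha h a /\ is_beta h b /\ is_alphabar h a ab /\ is_betabar h b bb /\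
    0 <= a /\ a < (3 * a + ab) / 4 /\ (3 * a + ab) / 4 < (bb + 3 * b) / 4 /\
    (bb + 3 * b) / 4 < b /\ b <= 1.

Definition is_solution (phi c d h f : R -> R) (lam : R) (u : R -> R) : Prop :=
  cont_on u (fun t => 0 <= t <= 1) /\
  exists up wp : R -> R,
    (forall t, 0 < t < 1 -> derivable_pt_lim u t (up t)) /\
    cont_on up (fun t => 0 < t < 1) /\
    (forall t, 0 < t < 1 ->
       derivable_pt_lim (fun s => d s * phi (c s * up s)) t (wp t)) /\
    cont_on wp (fun t => 0 < t < 1) /\
    (forall t, 0 < t < 1 -> wp t + lam * h t * f (u t) = 0) /\
    u 0 = 0 /\ u 1 = 0.

Definition is_positive_solution (phi c d h f : R -> R) (lam : R) (u : R -> R) : Prop :=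
  is_solution phi c d h f lam u /\ forall t, 0 < t < 1 -> 0 < u t.

Definition lim_at_0plus (g : R -> R) (L : R) : Prop :=
  forall eps, 0 < eps -> exists delta, 0 < delta /\
    forall s, 0 < s < delta -> Rabs (g s - L) < eps.
Definition lim_at_infty (g : R -> R) (L : R) : Prop :=
  forall eps, 0 < eps -> exists M, forall s, M < s -> Rabs (g s - L) < eps.

(* Main.v *)
Require Import Defs.
From Stdlib Require Import Reals Lra ClassicalEpsilon Classical.
From Coquelicot Require Import Coquelicot.
Open Scope R_scope.

Lemma cont_on_interior (g : R -> R) (P : R -> Prop) x r :
  cont_on g P -> 0 < r -> (forall y, Rabs (y - x) < r -> P y) -> continuity_pt g x.
Proof.
  intros Hg Hr HP.
  unfold continuity_pt, continue_in, limit1_in, limit_in; simpl; unfold R_dist.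
  intros eps Heps.
  destruct (Hg x (HP x ltac:(rewrite Rminus_diag, Rabs_R0; lra)) eps Heps) as [dl [Hdl H]].
  exists (Rmin dl r); split. apply Rmin_pos; lra.
  intros y [_ Hy]. apply H. apply HP. apply Rlt_le_trans with (1:=Hy), Rmin_r.
  apply Rlt_le_trans with (1:=Hy), Rmin_l.
Qed.

Lemma cont_on_interior' (g : R -> R) (P : R -> Prop) x r :
  cont_on g P -> 0 < r -> (forall y, Rabs (y - x) < r -> P y) -> continuous g x.
Proof. intros. apply continuity_pt_filterlim. eapply cont_on_interior; eauto. Qed.

Lemma cont_open01 (g : R -> R) x : cont_on g (fun t => 0 < t < 1) -> 0 < x < 1 ->
  continuous g x.
Proof.
  intros Hg Hx. apply (cont_on_interior' g _ x (Rmin x (1-x)) Hg).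
  apply Rmin_pos; lra.
  intros y Hy. pose proof (Rmin_l x (1-x)). pose proof (Rmin_r x (1-x)).
  apply Rabs_def2 in Hy. lra.
Qed.

Lemma cont_open01_pt (g : R -> R) x : cont_on g (fun t => 0 < t < 1) -> 0 < x < 1 ->
  continuity_pt g x.
Proof. intros. apply continuity_pt_filterlim. now apply cont_open01. Qed.

Definition clamp (t : R) := Rmax 0 (Rmin 1 t).

Lemma clamp_in t : 0 <= clamp t <= 1.
Proof. unfold clamp, Rmax, Rmin; repeat destruct Rle_dec; lra. Qed.

Lemma clamp_id t : 0 <= t <= 1 -> clamp t = t.
Proof. unfold clamp, Rmax, Rmin; repeat destruct Rle_dec; lra. Qed.

Lemma clamp_lip x y : Rabs (clamp y - clamp x) <= Rabs (y - x).
Proof. unfold clamp, Rmax, Rmin, Rabs; repeat destruct Rle_dec; repeat destruct Rcase_abs; lra. Qed.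

Lemma clamp_cont (g : R -> R) x : cont_on g (fun t => 0 <= t <= 1) ->
  continuity_pt (fun t => g (clamp t)) x.
Proof.
  intros Hg.
  unfold continuity_pt, continue_in, limit1_in, limit_in; simpl; unfold R_dist.
  intros eps Heps.
  destruct (Hg (clamp x) (clamp_in x) eps Heps) as [dl [Hdl H]].
  exists dl; split; auto.
  intros y [_ Hy]. apply H. apply clamp_in.
  eapply Rle_lt_trans. apply clamp_lip. auto.
Qed.

Lemma cont_min01 (g : R -> R) : cont_on g (fun t => 0 <= t <= 1) ->
  (forall t, 0 <= t <= 1 -> 0 < g t) -> exists m, 0 < m /\ forall t, 0 <= t <= 1 -> m <= g t.
Proof.
  intros Hg Hp.
  destruct (continuity_ab_min (fun t => g (clamp t)) 0 1 ltac:(lra)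
     (fun c _ => clamp_cont g c Hg)) as [mx [H1 H2]].
  exists (g (clamp mx)). split. apply Hp, clamp_in.
  intros t Ht. specialize (H1 t Ht). rewrite (clamp_id t Ht) in H1. exact H1.
Qed.

Lemma cont_max01 (g : R -> R) : cont_on g (fun t => 0 <= t <= 1) ->
  exists t0, 0 <= t0 <= 1 /\ forall t, 0 <= t <= 1 -> g t <= g t0.
Proof.
  intros Hg.
  destruct (continuity_ab_maj (fun t => g (clamp t)) 0 1 ltac:(lra)
     (fun c _ => clamp_cont g c Hg)) as [mx [H1 H2]].
  exists mx. split; auto. intros t Ht. specialize (H1 t Ht).
  rewrite (clamp_id t Ht), (clamp_id mx H2) in H1. exact H1.
Qed.

Lemma integral_eq g a b : ex_RInt g a b -> integral g a b = RInt g a b.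
Proof.
  intros H. pose proof (ex_RInt_Reals_0 _ _ _ H) as pr.
  assert (Hex : exists v, Rint g a b v) by (exists (RiemannInt pr); exists pr; auto).
  unfold integral.
  destruct (epsilon_spec (inhabits 0) (fun v => Rint g a b v) Hex) as [pr' Hpr'].
  rewrite <- Hpr'. symmetry. apply RInt_Reals.
Qed.

Lemma ex_RInt_open01 g a b : cont_on g (fun t => 0 < t < 1) -> 0 < a -> a <= b -> b < 1 ->
  ex_RInt g a b.
Proof.
  intros Hg Ha Hab Hb. apply (@ex_RInt_continuous R_CompleteNormedModule). intros z Hz.
  rewrite Rmin_left in Hz by lra. rewrite Rmax_right in Hz by lra.
  apply cont_open01; auto; lra.
Qed.

Lemma ftc01 F F' a b : (forall t, 0 < t < 1 -> derivable_pt_lim F t (F' t)) ->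
  cont_on F' (fun t => 0 < t < 1) -> 0 < a -> a <= b -> b < 1 ->
  F b - F a = RInt F' a b.
Proof.
  intros HD HC Ha Hab Hb. symmetry. apply is_RInt_unique.
  apply (@is_RInt_derive R_CompleteNormedModule F F' a b).
  - intros x Hx. rewrite Rmin_left in Hx by lra. rewrite Rmax_right in Hx by lra.
    apply is_derive_Reals. apply HD. lra.
  - intros x Hx. rewrite Rmin_left in Hx by lra. rewrite Rmax_right in Hx by lra.
    apply cont_open01; auto; lra.
Qed.

Section Inv.
Variables psi1 psi1inv : R -> R.
Hypothesis Hnn : forall x, 0 <= x -> 0 <= psi1 x.
Hypothesis Hinc : forall x y, 0 <= x -> x < y -> psi1 x < psi1 y.
Hypothesis Hinv : forall y, 0 <= y -> 0 <= psi1inv y /\ psi1 (psi1inv y) = y.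

Lemma psi_le x y : 0 <= x -> x <= y -> psi1 x <= psi1 y.
Proof. intros. destruct (Req_dec x y). subst; lra. left; apply Hinc; lra. Qed.

Lemma psi_le_inv x y : 0 <= x -> 0 <= y -> psi1 x <= psi1 y -> x <= y.
Proof. intros. destruct (Rle_lt_dec x y); auto. pose proof (Hinc y x). lra. Qed.

Lemma inv_nonneg y : 0 <= y -> 0 <= psi1inv y.
Proof. intros; apply Hinv; auto. Qed.

Lemma inv_mono a b : 0 <= a -> a <= b -> psi1inv a <= psi1inv b.
Proof.
  intros. destruct (Hinv a) as [A1 A2]; auto. destruct (Hinv b) as [B1 B2]; try lra.
  apply psi_le_inv; auto. lra.
Qed.

Lemma inv_of x : 0 <= x -> psi1inv (psi1 x) = x.
Proof.
  intros Hx. assert (H: 0 <= psi1 x) by (apply Hnn; auto).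
  destruct (Hinv (psi1 x) H) as [C1 C2].
  apply Rle_antisym; apply psi_le_inv; auto; lra.
Qed.

Lemma inv_cont_pt y0 : continuity_pt (fun y => psi1inv (Rmax 0 y)) y0.
Proof.
  unfold continuity_pt, continue_in, limit1_in, limit_in; simpl; unfold R_dist.
  intros eps Heps.
  set (yv := Rmax 0 y0). assert (Hyv : 0 <= yv) by apply Rmax_l.
  destruct (Hinv yv Hyv) as [X1 X2]. set (x0 := psi1inv yv) in *.
  set (g1 := psi1 (x0 + eps/2) - yv).
  assert (Hg1 : 0 < g1). { unfold g1. rewrite <- X2. pose proof (Hinc x0 (x0+eps/2)). lra. }
  set (g2 := if Rlt_dec 0 (x0 - eps/2) then yv - psi1 (x0 - eps/2) else 1).
  assert (Hg2 : 0 < g2).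
  { unfold g2; destruct Rlt_dec; [|lra]. rewrite <- X2. pose proof (Hinc (x0-eps/2) x0). lra. }
  exists (Rmin g1 g2). split. apply Rmin_pos; auto.
  intros y [_ Hy]. pose proof (Rmin_l g1 g2). pose proof (Rmin_r g1 g2).
  assert (Hz : Rabs (Rmax 0 y - yv) < Rmin g1 g2).
  { eapply Rle_lt_trans; [|exact Hy]. unfold yv, Rmax, Rabs; repeat destruct Rle_dec; repeat destruct Rcase_abs; lra. }
  set (z := Rmax 0 y) in *. assert (0 <= z) by apply Rmax_l.
  destruct (Hinv z H1) as [Z1 Z2]. set (x := psi1inv z) in *.
  apply Rabs_def2 in Hz. apply Rabs_def1.
  - destruct (Rlt_le_dec (x - x0) eps); auto.
    pose proof (psi_le (x0 + eps/2) x ltac:(lra) ltac:(lra)). unfold g1 in *. lra.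
  - destruct (Rlt_le_dec (-eps) (x - x0)); auto.
    unfold g2 in *. destruct Rlt_dec as [r0|r0].
    + pose proof (psi_le x (x0 - eps/2) Z1 ltac:(lra)). lra.
    + lra.
Qed.

Lemma inv_cont y0 : continuous (fun y => psi1inv (Rmax 0 y)) y0.
Proof. apply continuity_pt_filterlim, inv_cont_pt. Qed.

End Inv.

Lemma RInt_le_const f a b k : a <= b -> ex_RInt f a b -> (forall x, a < x < b -> f x <= k) ->
  RInt f a b <= (b - a) * k.
Proof.
  intros Hab Hf Hk.
  replace ((b - a) * k) with (RInt (fun _ => k) a b).
  apply RInt_le; auto. apply ex_RInt_const.
  rewrite RInt_const. reflexivity.
Qed.

Lemma Chasles' f a b c : ex_RInt f a b -> ex_RInt f b c -> RInt f a c = RInt f a b + RInt f b c.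
Proof. intros. rewrite <- (RInt_Chasles f a b c); auto. Qed.

Section StepD.
Variables psi1 psi1inv G : R -> R.
Hypothesis Hnn : forall x, 0 <= x -> 0 <= psi1 x.
Hypothesis Hinc : forall x y, 0 <= x -> x < y -> psi1 x < psi1 y.
Hypothesis Hinv : forall y, 0 <= y -> 0 <= psi1inv y /\ psi1 (psi1inv y) = y.
Hypothesis HG0 : forall t, 0 < t <= 1/2 -> 0 <= G t.
Hypothesis HGdec : forall s t, 0 < s <= t -> t <= 1/2 -> G t <= G s.
Hypothesis HGint : forall eps a b, 0 <= eps <= 1 -> 0 < a <= b -> b <= 1/2 ->
  ex_RInt (fun t => psi1inv (eps * G t)) a b.
Hypothesis HB : exists B, forall e, 0 < e <= 1/2 -> RInt (fun t => psi1inv (G t)) e (1/2) <= B.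

Lemma HGint1 a b : 0 < a <= b -> b <= 1/2 -> ex_RInt (fun t => psi1inv (G t)) a b.
Proof.
  intros. apply (ex_RInt_ext (fun t => psi1inv (1 * G t))).
  intros; now rewrite Rmult_1_l. apply HGint; lra.
Qed.

Lemma stepD eta : 0 < eta -> exists e0, 0 < e0 /\ forall eps e, 0 <= eps <= e0 -> 0 < e <= 1/2 ->
  RInt (fun t => psi1inv (eps * G t)) e (1/2) <= eta.
Proof.
  intros Heta. destruct HB as [B HBB].
  set (F := fun e => RInt (fun t => psi1inv (G t)) e (1/2)).
  set (E := fun y => exists e, 0 < e <= 1/2 /\ y = F e).
  assert (Hb : bound E). { exists B. intros y [e [He ->]]. apply HBB; auto. }
  assert (Hne : exists y, E y). { exists (F (1/2)). exists (1/2). split; auto; lra. }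
  destruct (completeness E Hb Hne) as [L [HL1 HL2]].
  assert (Hd : exists d, 0 < d <= 1/2 /\ L - eta/2 < F d).
  { apply NNPP. intros Hn.
    assert (L <= L - eta/2). apply HL2. intros y [e [He ->]].
    destruct (Rle_lt_dec (F e) (L - eta/2)); auto. exfalso; apply Hn; exists e; auto.
    lra. }
  destruct Hd as [d [Hd HFd]].
  assert (Hleft : forall e, 0 < e <= d -> RInt (fun t => psi1inv (G t)) e d <= eta/2).
  { intros e He. assert (F e <= L) by (apply HL1; exists e; split; auto; lra).
    unfold F in *. rewrite (Chasles' _ e d (1/2)) in H. lra.
    apply HGint1; lra. apply HGint1; lra. }
  assert (Hp : 0 < psi1 (eta/2)). { pose proof (Hnn 0). pose proof (Hinc 0 (eta/2)). lra. }
  assert (HGd := HG0 d Hd).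
  exists (Rmin 1 (psi1 (eta/2) / (G d + 1))). split.
  { apply Rmin_pos. lra. apply Rdiv_lt_0_compat; lra. }
  intros eps e Heps He.
  pose proof (Rmin_l 1 (psi1 (eta / 2) / (G d + 1))) as M1.
  pose proof (Rmin_r 1 (psi1 (eta / 2) / (G d + 1))) as M2.
  assert (Hright : forall t, d <= t <= 1/2 -> psi1inv (eps * G t) <= eta/2).
  { intros t Ht. rewrite <- (inv_of psi1 psi1inv Hnn Hinc Hinv (eta/2)) by lra.
    apply (inv_mono psi1 psi1inv Hinc Hinv).
    apply Rmult_le_pos; try lra. apply HG0; lra.
    assert (G t <= G d) by (apply HGdec; lra).
    assert (0 <= G t) by (apply HG0; lra).
    assert (eps * G t <= (psi1 (eta / 2) / (G d + 1)) * (G d + 1)).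
    { apply Rmult_le_compat; lra. }
    unfold Rdiv in H1. rewrite Rmult_assoc, Rinv_l, Rmult_1_r in H1 by lra. lra. }
  destruct (Rle_lt_dec e d) as [Hed|Hed].
  - rewrite (Chasles' _ e d (1/2)) by (apply HGint; lra).
    assert (RInt (fun t => psi1inv (eps * G t)) d (1/2) <= (1/2 - d) * (eta/2)).
    { apply RInt_le_const. lra. apply HGint; lra. intros; apply Hright; lra. }
    assert (RInt (fun t => psi1inv (eps * G t)) e d <= RInt (fun t => psi1inv (G t)) e d).
    { apply RInt_le. lra. apply HGint; lra. apply HGint1; lra.
      intros x Hx. apply (inv_mono psi1 psi1inv Hinc Hinv).
      apply Rmult_le_pos; try lra. apply HG0; lra.
      assert (0 <= G x) by (apply HG0; lra).
      rewrite <- (Rmult_1_l (G x)) at 2. apply Rmult_le_compat_r; lra. }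
    specialize (Hleft e ltac:(lra)). nra.
  - assert (RInt (fun t => psi1inv (eps * G t)) e (1/2) <= (1/2 - e) * (eta/2)).
    { apply RInt_le_const. lra. apply HGint; lra. intros; apply Hright; lra. }
    nra.
Qed.

End StepD.

Lemma phi0 phi : odd_inc_homeo phi -> phi 0 = 0.
Proof. intros [_ [_ [_ Ho]]]. specialize (Ho 0). rewrite Ropp_0 in Ho. lra. Qed.

Lemma phi_pos phi s : odd_inc_homeo phi -> 0 < s -> 0 < phi s.
Proof. intros Hp Hs. pose proof (phi0 phi Hp). destruct Hp as [Hi _]. specialize (Hi 0 s Hs). lra. Qed.

Lemma phi_le phi x y : odd_inc_homeo phi -> x <= y -> phi x <= phi y.
Proof. intros [Hi _] H. destruct (Req_dec x y). subst; lra. left; apply Hi; lra. Qed.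

Lemma phi_le_inv phi x y : odd_inc_homeo phi -> phi x <= phi y -> x <= y.
Proof. intros Hp H. destruct (Rle_lt_dec x y); auto. destruct Hp as [Hi _]. specialize (Hi y x r). lra. Qed.

Lemma fbound phi f f0 finf : odd_inc_homeo phi -> cont_on f (fun s => 0 <= s) ->
  lim_at_0plus (fun s => f s / phi s) f0 -> lim_at_infty (fun s => f s / phi s) finf ->
  exists K, 0 < K /\ forall s, 0 < s -> f s <= K * phi s.
Proof.
  intros Hp Hf H0 Hi.
  destruct (H0 1 ltac:(lra)) as [dl [Hdl Hd]].
  destruct (Hi 1 ltac:(lra)) as [N HN].
  set (q := fun s => f s / phi s).
  set (b := Rmax N dl + 1).
  assert (Hb : dl/2 <= b) by (unfold b; pose proof (Rmax_r N dl); lra).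
  destruct (continuity_ab_maj q (dl/2) b Hb) as [Mx [HM1 HM2]].
  { intros c Hc. unfold q. apply continuity_pt_div.
    apply (cont_on_interior f _ c (dl/2) Hf). lra.
    intros y Hy. apply Rabs_def2 in Hy. lra.
    destruct Hp as [_ [Hc' _]]. apply Hc'.
    pose proof (phi_pos phi c Hp ltac:(lra)). lra. }
  set (K := Rmax (Rmax (f0+1) (finf+1)) (Rmax 1 (q Mx))).
  pose proof (Rmax_l (Rmax (f0+1) (finf+1)) (Rmax 1 (q Mx))).
  pose proof (Rmax_r (Rmax (f0+1) (finf+1)) (Rmax 1 (q Mx))).
  pose proof (Rmax_l (f0+1) (finf+1)). pose proof (Rmax_r (f0+1) (finf+1)).
  pose proof (Rmax_l 1 (q Mx)). pose proof (Rmax_r 1 (q Mx)).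
  exists K. split. unfold K; lra.
  intros s Hs.
  assert (Hq : f s / phi s <= K).
  { destruct (Rlt_le_dec s dl).
    - specialize (Hd s ltac:(lra)). apply Rabs_def2 in Hd. unfold K; lra.
    - destruct (Rlt_le_dec N s).
      + specialize (HN s r0). apply Rabs_def2 in HN. unfold K; lra.
      + assert (Hqq : q s <= q Mx). apply HM1. split. lra. unfold b. pose proof (Rmax_l N dl). lra.
        unfold q at 1 in Hqq. unfold K; lra. }
  pose proof (phi_pos phi s Hp Hs).
  apply (Rmult_le_compat_r (phi s)) in Hq; [|lra].
  unfold Rdiv in Hq. rewrite Rmult_assoc, Rinv_l, Rmult_1_r in Hq by lra. exact Hq.
Qed.

Section Ints.
Variable h : R -> R.
Hypothesis Hh : cont_on h (fun t => 0 < t < 1).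

Lemma exint01 a b : 0 < a < 1 -> 0 < b < 1 -> ex_RInt h a b.
Proof.
  intros Ha Hb. destruct (Rle_lt_dec a b).
  apply ex_RInt_open01; auto; lra.
  apply ex_RInt_swap. apply ex_RInt_open01; auto; lra.
Qed.

Lemma contJ t : 0 < t < 1 -> continuous (fun s => RInt h (1/2) s) t.
Proof.
  intros Ht. apply (continuous_RInt_1 h (1/2) t).
  apply (locally_interval _ t 0 1); simpl; try lra.
  intros y Hy1 Hy2. apply (@RInt_correct R_CompleteNormedModule). apply exint01; lra.
Qed.

Lemma contI t : 0 < t < 1 -> continuous (fun s => RInt h s (1/2)) t.
Proof.
  intros Ht. apply (continuous_ext_loc _ (fun s => opp (RInt h (1/2) s))).
  apply (locally_interval _ t 0 1); simpl; try lra.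
  intros y Hy1 Hy2. apply (@opp_RInt_swap R_CompleteNormedModule). apply exint01; lra.
  apply (@continuous_opp R_UniformSpace R_AbsRing R_NormedModule). apply contJ; auto.
Qed.

Lemma RInt_negscal Q a b : ex_RInt h a b -> RInt (fun s => -(Q * h s)) a b = -(Q * RInt h a b).
Proof.
  intros He.
  rewrite (RInt_ext _ (fun s => @opp R_CompleteNormedModule (@scal R_AbsRing R_CompleteNormedModule Q (h s)))).
  rewrite (@RInt_opp R_CompleteNormedModule). rewrite (@RInt_scal R_CompleteNormedModule); auto.
  all: try reflexivity. all: try (apply (@ex_RInt_scal R_CompleteNormedModule); auto).
Qed.

Variables psi1 psi1inv : R -> R.
Hypothesis Hnn : forall x, 0 <= x -> 0 <= psi1 x.
Hypothesis Hinc : forall x y, 0 <= x -> x < y -> psi1 x < psi1 y.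
Hypothesis Hinv : forall y, 0 <= y -> 0 <= psi1inv y /\ psi1 (psi1inv y) = y.
Hypothesis Hhnn : forall t, 0 < t < 1 -> 0 <= h t.

Lemma I_nonneg t : 0 < t <= 1/2 -> 0 <= RInt h t (1/2).
Proof. intros. apply RInt_ge_0. lra. apply exint01; lra. intros; apply Hhnn; lra. Qed.

Lemma J_nonneg t : 1/2 <= t < 1 -> 0 <= RInt h (1/2) t.
Proof. intros. apply RInt_ge_0. lra. apply exint01; lra. intros; apply Hhnn; lra. Qed.

Lemma contK (G : R -> R) eps t : continuous G t ->
  continuous (fun s => psi1inv (Rmax 0 (eps * G s))) t.
Proof.
  intros HG. apply (continuous_comp (fun s => eps * G s) (fun y => psi1inv (Rmax 0 y))).
  apply (continuous_scal_r eps G t HG).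
  apply (inv_cont psi1 psi1inv Hinc Hinv).
Qed.

Lemma exint_I eps a b : 0 <= eps -> 0 < a <= b -> b <= 1/2 ->
  ex_RInt (fun s => psi1inv (eps * RInt h s (1/2))) a b.
Proof.
  intros He Ha Hb.
  apply (ex_RInt_ext (fun s => psi1inv (Rmax 0 (eps * RInt h s (1/2))))).
  { intros x Hx. rewrite Rmin_left, Rmax_right in Hx by lra.
    rewrite Rmax_right; auto. apply Rmult_le_pos; auto. apply I_nonneg; lra. }
  apply (@ex_RInt_continuous R_CompleteNormedModule). intros z Hz.
  rewrite Rmin_left, Rmax_right in Hz by lra.
  apply contK. apply contI. lra.
Qed.

Lemma exint_J eps a b : 0 <= eps -> 1/2 <= a <= b -> b < 1 ->
  ex_RInt (fun s => psi1inv (eps * RInt h (1/2) s)) a b.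
Proof.
  intros He Ha Hb.
  apply (ex_RInt_ext (fun s => psi1inv (Rmax 0 (eps * RInt h (1/2) s)))).
  { intros x Hx. rewrite Rmin_left, Rmax_right in Hx by lra.
    rewrite Rmax_right; auto. apply Rmult_le_pos; auto. apply J_nonneg; lra. }
  apply (@ex_RInt_continuous R_CompleteNormedModule). intros z Hz.
  rewrite Rmin_left, Rmax_right in Hz by lra.
  apply contK. apply contJ. lra.
Qed.

End Ints.

Section Core.
Variables phi psi1 psi1inv c d h f u up wp : R -> R.
Variables lam K cmin dmin M t0 : R.
Hypothesis Hphi : odd_inc_homeo phi.
Hypothesis HA3 : forall x y, 0 <= x -> 0 <= y -> phi x * psi1 y <= phi (x * y).
Hypothesis Hnn : forall x, 0 <= x -> 0 <= psi1 x.
Hypothesis Hinc : forall x y, 0 <= x -> x < y -> psi1 x < psi1 y.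
Hypothesis Hinv : forall y, 0 <= y -> 0 <= psi1inv y /\ psi1 (psi1inv y) = y.
Hypothesis Hcmin : 0 < cmin.
Hypothesis Hc : forall t, 0 < t < 1 -> cmin <= c t.
Hypothesis Hdmin : 0 < dmin.
Hypothesis Hd : forall t, 0 < t < 1 -> dmin <= d t.
Hypothesis HK : 0 < K.
Hypothesis HKf : forall s, 0 < s -> f s <= K * phi s.
Hypothesis Hlam : 0 <= lam.
Hypothesis Hh : cont_on h (fun t => 0 < t < 1).
Hypothesis Hhnn : forall t, 0 < t < 1 -> 0 <= h t.
Hypothesis Hud : forall t, 0 < t < 1 -> derivable_pt_lim u t (up t).
Hypothesis Hupc : cont_on up (fun t => 0 < t < 1).
Hypothesis Hwd : forall t, 0 < t < 1 ->
       derivable_pt_lim (fun s => d s * phi (c s * up s)) t (wp t).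
Hypothesis Hwpc : cont_on wp (fun t => 0 < t < 1).
Hypothesis Heq : forall t, 0 < t < 1 -> wp t + lam * h t * f (u t) = 0.
Hypothesis Hupos : forall t, 0 < t < 1 -> 0 < u t.
Hypothesis HuM : forall t, 0 < t < 1 -> u t <= M.
Hypothesis Ht0 : 0 < t0 < 1.
Hypothesis Hut0 : u t0 = M.
Hypothesis Hup0 : up t0 = 0.

Let w := fun s => d s * phi (c s * up s).
Let Q := lam * K * phi M.
Let eps := lam * K / dmin.

Lemma HMpos : 0 < M.
Proof. rewrite <- Hut0. apply Hupos; auto. Qed.

Lemma Qnn : 0 <= Q.
Proof. unfold Q. pose proof (phi_pos phi M Hphi HMpos). apply Rmult_le_pos; try lra. apply Rmult_le_pos; lra. Qed.

Lemma eps_nn : 0 <= eps.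
Proof. unfold eps. apply Rmult_le_pos. apply Rmult_le_pos; lra. left; apply Rinv_0_lt_compat; lra. Qed.

Lemma w0 : w t0 = 0.
Proof. unfold w. rewrite Hup0, Rmult_0_r, (phi0 phi Hphi). ring. Qed.

Lemma wp_bound s : 0 < s < 1 -> - (Q * h s) <= wp s.
Proof.
  intros Hs. pose proof (Heq s Hs). pose proof (Hhnn s Hs).
  assert (f (u s) <= K * phi M).
  { eapply Rle_trans. apply HKf, Hupos; auto. apply Rmult_le_compat_l. lra.
    apply phi_le; auto. }
  assert (lam * h s * f (u s) <= lam * h s * (K * phi M)).
  { apply Rmult_le_compat_l; auto. apply Rmult_le_pos; auto. }
  unfold Q. nra.
Qed.

Lemma stepB t G : 0 < t < 1 -> 0 <= G -> d t * phi (Rabs (c t * up t)) <= Q * G ->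
  Rabs (up t) <= M / cmin * psi1inv (eps * G).
Proof.
  intros Ht HG Hw.
  assert (HeG : 0 <= eps * G) by (apply Rmult_le_pos; auto; apply eps_nn).
  destruct (Hinv _ HeG) as [Y1 Y2]. set (y := psi1inv (eps * G)) in *.
  pose proof HMpos as HM. pose proof (Hc t Ht). pose proof (Hd t Ht).
  destruct (Req_dec (up t) 0) as [Hz|Hz].
  { rewrite Hz, Rabs_R0. apply Rmult_le_pos; auto. unfold Rdiv. apply Rmult_le_pos; try lra.
    left; apply Rinv_0_lt_compat; lra. }
  set (x := Rabs (c t * up t)).
  assert (Hx : 0 < x). { unfold x. apply Rabs_pos_lt. apply Rmult_integral_contrapositive; split; lra. }
  pose proof (phi_pos phi x Hphi Hx).
  assert (dmin * phi x <= lam * K * phi M * G).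
  { assert (Hw2 : d t * phi x <= Q * G) by exact Hw. eapply Rle_trans; [|apply Hw2]. apply Rmult_le_compat_r; lra. }
  assert (phi x <= phi M * psi1 y).
  { rewrite Y2. unfold eps.
    replace (phi M * (lam * K / dmin * G)) with ((lam * K * phi M * G) * / dmin) by (field; lra).
    apply Rle_trans with ((dmin * phi x) * / dmin). right; field; lra.
    apply Rmult_le_compat_r; auto. left; apply Rinv_0_lt_compat; lra. }
  pose proof (HA3 M y ltac:(lra) Y1).
  assert (x <= M * y) by (apply (phi_le_inv phi); auto; lra).
  unfold x in H5. rewrite Rabs_mult, (Rabs_pos_eq (c t)) in H5 by lra.
  assert (cmin * Rabs (up t) <= M * y).
  { eapply Rle_trans; [|apply H5]. apply Rmult_le_compat_r. apply Rabs_pos. lra. }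
  apply (Rmult_le_reg_l cmin); auto. field_simplify; lra.
Qed.

Lemma RInt_scal_R g a b k : ex_RInt g a b -> RInt (fun s => k * g s) a b = k * RInt g a b.
Proof.
  intros He.
  rewrite (RInt_ext _ (fun s => @scal R_AbsRing R_CompleteNormedModule k (g s))).
  rewrite (@RInt_scal R_CompleteNormedModule); auto.
  intros; reflexivity.
Qed.

Lemma exint_scal_R g a b k : ex_RInt g a b -> ex_RInt (fun s => k * g s) a b.
Proof.
  intros He. apply (ex_RInt_ext (fun s => @scal R_AbsRing R_CompleteNormedModule k (g s))).
  intros; reflexivity. apply (@ex_RInt_scal R_CompleteNormedModule); auto.
Qed.

Lemma exint_negscal a b : 0 < a < 1 -> 0 < b < 1 -> ex_RInt (fun s => -(Q * h s)) a b.
Proof.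
  intros. apply (@ex_RInt_ext R_NormedModule (fun s => -1 * (Q * h s))). intros. change (-1 * (Q * h x) = - (Q * h x) :> R). ring.
  apply exint_scal_R, exint_scal_R, exint01; auto.
Qed.

Let I := fun s => RInt h s (1/2).
Let J := fun s => RInt h (1/2) s.

Lemma left_side : t0 <= 1/2 -> forall e, 0 < e < t0 ->
  M - u e <= M / cmin * RInt (fun s => psi1inv (eps * RInt h s (1/2))) e (1/2).
Proof.
  intros Ht0h e He.
  assert (Hwt : forall t, 0 < t <= t0 -> w t <= Q * I t).
  { intros t Ht.
    pose proof (ftc01 w wp t t0 Hwd Hwpc ltac:(lra) ltac:(lra) ltac:(lra)) as E1.
    rewrite w0 in E1.
    assert (RInt (fun s => -(Q * h s)) t t0 <= RInt wp t t0).
    { apply RInt_le. lra. apply exint_negscal; lra. apply ex_RInt_open01; auto; lra.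
      intros x Hx. apply wp_bound. lra. }
    rewrite RInt_negscal in H by (auto; apply (exint01 h Hh); lra).
    assert (RInt h t t0 <= I t).
    { unfold I. rewrite (Chasles' h t t0 (1/2)) by (apply (exint01 h Hh); lra).
      pose proof (I_nonneg h Hh Hhnn t0 ltac:(lra)). lra. }
    pose proof Qnn. nra. }
  assert (Hupb : forall t, 0 < t <= t0 -> up t <= M / cmin * psi1inv (eps * I t)).
  { intros t Ht. destruct (Rle_lt_dec (up t) 0).
    - apply Rle_trans with 0; auto. pose proof HMpos.
      apply Rmult_le_pos. unfold Rdiv; apply Rmult_le_pos; try lra. left; apply Rinv_0_lt_compat; lra.
      apply inv_nonneg with psi1; auto. apply Rmult_le_pos. apply eps_nn. apply I_nonneg; auto; lra.
    - eapply Rle_trans; [apply Rle_abs|]. apply stepB. lra. apply I_nonneg; auto; lra.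
      pose proof (Hc t ltac:(lra)).
      rewrite Rabs_pos_eq by (apply Rmult_le_pos; lra). apply Hwt; auto. }
  pose proof (ftc01 u up e t0 Hud Hupc ltac:(lra) ltac:(lra) ltac:(lra)) as E2.
  rewrite Hut0 in E2. rewrite E2.
  assert (Hex : forall a b, 0 < a <= b -> b <= 1/2 ->
     ex_RInt (fun s => M / cmin * psi1inv (eps * RInt h s (1/2))) a b).
  { intros. apply exint_scal_R. apply exint_I with psi1; auto. apply eps_nn. }
  apply Rle_trans with (RInt (fun s => M / cmin * psi1inv (eps * RInt h s (1/2))) e t0).
  { apply RInt_le. lra. apply ex_RInt_open01; auto; lra. apply Hex; lra.
    intros x Hx. apply Hupb; lra. }
  rewrite <- RInt_scal_R by (apply exint_I with psi1; auto; [apply eps_nn|lra|lra]).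
  rewrite (Chasles' _ e t0 (1/2)) by (apply Hex; lra).
  assert (0 <= RInt (fun s => M / cmin * psi1inv (eps * RInt h s (1/2))) t0 (1/2)).
  { apply RInt_ge_0. lra. apply Hex; lra. intros x Hx. pose proof HMpos.
    apply Rmult_le_pos. unfold Rdiv; apply Rmult_le_pos; try lra. left; apply Rinv_0_lt_compat; lra.
    apply inv_nonneg with psi1; auto. apply Rmult_le_pos. apply eps_nn. apply I_nonneg; auto; lra. }
  lra.
Qed.

Lemma right_side : 1/2 <= t0 -> forall e, t0 < e < 1 ->
  M - u e <= M / cmin * RInt (fun s => psi1inv (eps * RInt h (1/2) s)) (1/2) e.
Proof.
  intros Ht0h e He.
  assert (Hwt : forall t, t0 <= t < 1 -> - w t <= Q * J t).
  { intros t Ht.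
    pose proof (ftc01 w wp t0 t Hwd Hwpc ltac:(lra) ltac:(lra) ltac:(lra)) as E1.
    rewrite w0 in E1.
    assert (RInt (fun s => -(Q * h s)) t0 t <= RInt wp t0 t).
    { apply RInt_le. lra. apply exint_negscal; lra. apply ex_RInt_open01; auto; lra.
      intros x Hx. apply wp_bound. lra. }
    rewrite RInt_negscal in H by (auto; apply (exint01 h Hh); lra).
    assert (RInt h t0 t <= J t).
    { unfold J. rewrite (Chasles' h (1/2) t0 t) by (apply (exint01 h Hh); lra).
      pose proof (J_nonneg h Hh Hhnn t0 ltac:(lra)). lra. }
    pose proof Qnn. nra. }
  assert (Hupb : forall t, t0 <= t < 1 -> - up t <= M / cmin * psi1inv (eps * J t)).
  { intros t Ht. destruct (Rle_lt_dec 0 (up t)).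
    - apply Rle_trans with 0; [lra|]. pose proof HMpos.
      apply Rmult_le_pos. unfold Rdiv; apply Rmult_le_pos; try lra. left; apply Rinv_0_lt_compat; lra.
      apply inv_nonneg with psi1; auto. apply Rmult_le_pos. apply eps_nn. apply J_nonneg; auto; lra.
    - eapply Rle_trans; [apply Rle_abs|]. rewrite Rabs_Ropp. apply stepB. lra. apply J_nonneg; auto; lra.
      pose proof (Hc t ltac:(lra)).
      rewrite Rabs_left by (apply Rmult_pos_neg; lra).
      destruct Hphi as [_ [_ [_ Hodd]]]. rewrite Hodd.
      specialize (Hwt t Ht). unfold w in Hwt. lra. }
  pose proof (ftc01 u up t0 e Hud Hupc ltac:(lra) ltac:(lra) ltac:(lra)) as E2.
  rewrite Hut0 in E2.
  assert (E3 : M - u e = RInt (fun s => -1 * up s) t0 e).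
  { rewrite RInt_scal_R by (apply ex_RInt_open01; auto; lra). lra. }
  rewrite E3.
  assert (Hex : forall a b, 1/2 <= a <= b -> b < 1 ->
     ex_RInt (fun s => M / cmin * psi1inv (eps * RInt h (1/2) s)) a b).
  { intros. apply exint_scal_R. apply exint_J with psi1; auto. apply eps_nn. }
  apply Rle_trans with (RInt (fun s => M / cmin * psi1inv (eps * RInt h (1/2) s)) t0 e).
  { apply RInt_le. lra. apply exint_scal_R, ex_RInt_open01; auto; lra. apply Hex; lra.
    intros x Hx. pose proof (Hupb x ltac:(lra)) as HH. unfold J in HH. lra. }
  rewrite <- RInt_scal_R by (apply exint_J with psi1; auto; [apply eps_nn|lra|lra]).
  rewrite (Chasles' _ (1/2) t0 e) by (apply Hex; lra).
  assert (0 <= RInt (fun s => M / cmin * psi1inv (eps * RInt h (1/2) s)) (1/2) t0).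
  { apply RInt_ge_0. lra. apply Hex; lra. intros x Hx. pose proof HMpos.
    apply Rmult_le_pos. unfold Rdiv; apply Rmult_le_pos; try lra. left; apply Rinv_0_lt_compat; lra.
    apply inv_nonneg with psi1; auto. apply Rmult_le_pos. apply eps_nn. apply J_nonneg; auto; lra. }
  lra.
Qed.

End Core.

Lemma refl_int (k : R -> R) a b : ex_RInt k a b -> RInt k a b = RInt (fun s => k (1 - s)) (1 - b) (1 - a).
Proof.
  intros He. symmetry. apply (@is_RInt_unique R_CompleteNormedModule).
  pose proof (@RInt_correct R_CompleteNormedModule k a b He) as H1.
  apply (@is_RInt_swap R_NormedModule) in H1.
  assert (H2 : is_RInt k (-1 * (1 - b) + 1) (-1 * (1 - a) + 1) (opp (RInt k a b))).
  { replace (-1 * (1 - b) + 1) with b by ring. replace (-1 * (1 - a) + 1) with a by ring. exact H1. }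
  apply (@is_RInt_comp_lin R_NormedModule) in H2.
  apply (@is_RInt_scal R_NormedModule _ _ _ (-1)) in H2.
  replace (RInt k a b) with (@scal R_AbsRing R_NormedModule (-1) (@opp R_NormedModule (RInt k a b))).
  2: { change (-1 * - RInt k a b = RInt k a b). ring. }
  apply (@is_RInt_ext R_NormedModule _ _ _ _ _ (fun x _ => eq_refl) ) in H2.
  eapply (@is_RInt_ext R_NormedModule); [|exact H2].
  intros x _. change (-1 * (-1 * k (-1 * x + 1)) = k (1 - x)).
  replace (-1 * x + 1) with (1 - x) by ring. ring.
Qed.

Section Small.
Variables psi1 psi1inv h : R -> R.
Hypothesis Hnn : forall x, 0 <= x -> 0 <= psi1 x.
Hypothesis Hinc : forall x y, 0 <= x -> x < y -> psi1 x < psi1 y.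
Hypothesis Hinv : forall y, 0 <= y -> 0 <= psi1inv y /\ psi1 (psi1inv y) = y.
Hypothesis Hh : cont_on h (fun t => 0 < t < 1).
Hypothesis Hhnn : forall t, 0 < t < 1 -> 0 <= h t.
Hypothesis Hhint : h_integrability h psi1inv.

Lemma smallL eta : 0 < eta -> exists e0, 0 < e0 /\ forall eps e, 0 <= eps <= e0 -> 0 < e <= 1/2 ->
  RInt (fun t => psi1inv (eps * RInt h t (1/2))) e (1/2) <= eta.
Proof.
  intros Heta.
  apply (stepD psi1 psi1inv (fun t => RInt h t (1/2))); auto.
  - intros; apply I_nonneg; auto; lra.
  - intros s t Hs Ht. rewrite (Chasles' h s t (1/2)) by (apply (exint01 h Hh); lra).
    assert (0 <= RInt h s t). apply RInt_ge_0. lra. apply (exint01 h Hh); lra. intros; apply Hhnn; lra.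
    lra.
  - intros. apply exint_I with psi1; auto; lra.
  - destruct Hhint as [[B HB] _]. exists B. intros e He.
    specialize (HB e He).
    assert (Hex : ex_RInt (fun t => psi1inv (RInt h t (1/2))) e (1/2)).
    { apply (@ex_RInt_ext R_NormedModule (fun t => psi1inv (1 * RInt h t (1/2)))).
      intros; now rewrite Rmult_1_l. apply exint_I with psi1; auto; lra. }
    assert (Hext : forall x, Rmin e (1/2) < x < Rmax e (1/2) ->
       psi1inv (RInt h x (1/2)) = psi1inv (integral h x (1/2))).
    { intros x Hx. rewrite Rmin_left, Rmax_right in Hx by lra.
      rewrite integral_eq; auto. apply (exint01 h Hh); lra. }
    rewrite integral_eq in HB.
    rewrite (RInt_ext _ _ _ _ Hext). exact HB.
    apply (@ex_RInt_ext R_NormedModule _ _ _ _ Hext Hex).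
Qed.

Lemma smallR eta : 0 < eta -> exists e0, 0 < e0 /\ forall eps e, 0 <= eps <= e0 -> 1/2 <= e < 1 ->
  RInt (fun t => psi1inv (eps * RInt h (1/2) t)) (1/2) e <= eta.
Proof.
  intros Heta.
  set (G := fun s => RInt h (1/2) (1 - s)).
  assert (HGc : forall s, 0 < s < 1 -> continuous G s).
  { intros s Hs. unfold G.
    apply (continuous_comp (fun s => 1 - s) (fun t => RInt h (1/2) t)).
    apply (continuity_pt_filterlim (fun s => 1 - s)). apply continuity_pt_minus.
    apply continuity_pt_const. intros ? ?; auto. apply derivable_continuous_pt, derivable_pt_id.
    apply contJ; auto; lra. }
  assert (HGint : forall eps a b, 0 <= eps <= 1 -> 0 < a <= b -> b <= 1/2 ->
    ex_RInt (fun t => psi1inv (eps * G t)) a b).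
  { intros eps a b He Ha Hb.
    apply (ex_RInt_ext (fun s => psi1inv (Rmax 0 (eps * G s)))).
    { intros x Hx. rewrite Rmin_left, Rmax_right in Hx by lra.
      rewrite Rmax_right; auto. apply Rmult_le_pos; try lra. apply J_nonneg; auto; lra. }
    apply (@ex_RInt_continuous R_CompleteNormedModule). intros z Hz.
    rewrite Rmin_left, Rmax_right in Hz by lra.
    apply (contK psi1 psi1inv Hinc Hinv). apply HGc. lra. }
  destruct (stepD psi1 psi1inv G Hnn Hinc Hinv) with (eta := eta) as [e0 [He0 Hs]]; auto.
  - intros; apply J_nonneg; auto; lra.
  - intros s t Hs Ht. unfold G. rewrite (Chasles' h (1/2) (1 - t) (1 - s)) by (apply (exint01 h Hh); lra).
    assert (0 <= RInt h (1 - t) (1 - s)). apply RInt_ge_0. lra. apply (exint01 h Hh); lra. intros; apply Hhnn; lra.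
    lra.
  - destruct Hhint as [_ [B HB]]. exists B. intros e He.
    specialize (HB (1 - e) ltac:(lra)).
    assert (Hex : ex_RInt (fun t => psi1inv (RInt h (1/2) t)) (1/2) (1 - e)).
    { apply (@ex_RInt_ext R_NormedModule (fun t => psi1inv (1 * RInt h (1/2) t))).
      intros; now rewrite Rmult_1_l. apply exint_J with psi1; auto; lra. }
    assert (Hext : forall x, Rmin (1/2) (1 - e) < x < Rmax (1/2) (1 - e) ->
       psi1inv (RInt h (1/2) x) = psi1inv (integral h (1/2) x)).
    { intros x Hx. rewrite Rmin_left, Rmax_right in Hx by lra.
      rewrite integral_eq; auto. apply (exint01 h Hh); lra. }
    rewrite integral_eq in HB.
    2: apply (@ex_RInt_ext R_NormedModule _ _ _ _ Hext Hex).
    rewrite <- (RInt_ext _ _ _ _ Hext) in HB.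
    rewrite refl_int in HB by exact Hex.
    replace (1 - (1 - e)) with e in HB by ring. replace (1 - 1/2) with (1/2) in HB by field.
    exact HB.
  - exists e0. split; auto. intros eps e He He'.
    rewrite refl_int by (apply exint_J with psi1; auto; lra).
    replace (1 - 1/2) with (1/2) by field.
    apply Hs; auto. lra.
Qed.

End Small.

Theorem theorem3p7
  (phi psi1 psi2 psi1inv c d f h : R -> R) (f0 finf : R)
  (Hphi : odd_inc_homeo phi)
  (HA : condA phi psi1 psi2)
  (Hpsi1inv : forall y, 0 <= y -> 0 <= psi1inv y /\ psi1 (psi1inv y) = y)
  (Hc : cont_on c (fun t => 0 <= t <= 1)) (Hcpos : forall t, 0 <= t <= 1 -> 0 < c t)
  (Hd : cont_on d (fun t => 0 <= t <= 1)) (Hdpos : forall t, 0 <= t <= 1 -> 0 < d t)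
  (Hf : cont_on f (fun s => 0 <= s)) (Hfnn : forall s, 0 <= s -> 0 <= f s)
  (Hfpos : forall s, 0 < s -> 0 < f s)
  (Hh : cont_on h (fun t => 0 < t < 1)) (Hhnn : forall t, 0 < t < 1 -> 0 <= h t)
  (Hhnz : exists t, 0 < t < 1 /\ h t <> 0)
  (Hhint : h_integrability h psi1inv)
  (Hgamma : gamma_condition h)
  (Hf0 : 0 <= f0) (Hf0lim : lim_at_0plus (fun s => f s / phi s) f0)
  (Hfinf : 0 <= finf) (Hfinflim : lim_at_infty (fun s => f s / phi s) finf) :
  exists lbar, 0 < lbar /\
    forall lam, 0 <= lam < lbar ->
      forall u : R -> R, ~ is_positive_solution phi c d h f lam u.
Proof.
  destruct HA as [[Hnn [Hinc _]] [_ HA3]].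
  assert (HA3' : forall x y, 0 <= x -> 0 <= y -> phi x * psi1 y <= phi (x * y))
    by (intros; apply HA3; auto).
  destruct (cont_min01 c Hc Hcpos) as [cmin [Hcm Hcm']].
  destruct (cont_min01 d Hd Hdpos) as [dmin [Hdm Hdm']].
  destruct (fbound phi f f0 finf Hphi Hf Hf0lim Hfinflim) as [K [HK HKf]].
  destruct (smallL psi1 psi1inv h Hnn Hinc Hpsi1inv Hh Hhnn Hhint (cmin/2) ltac:(lra)) as [eL [HeL HsL]].
  destruct (smallR psi1 psi1inv h Hnn Hinc Hpsi1inv Hh Hhnn Hhint (cmin/2) ltac:(lra)) as [eR [HeR HsR]].
  set (e0 := Rmin eL eR).
  assert (He0 : 0 < e0) by (apply Rmin_pos; auto).
  exists (e0 * dmin / K). split.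
  { apply Rdiv_lt_0_compat; auto. apply Rmult_lt_0_compat; auto. }
  intros lam Hlam u [[Hucont [up [wp [Hud [Hupc [Hwd [Hwpc [Heq [Hu0 Hu1]]]]]]]]] Hpos].
  destruct (cont_max01 u Hucont) as [t0 [Ht0 Hmax]].
  assert (Hhalf : 0 < u (1/2)) by (apply Hpos; lra).
  assert (Hh2 := Hmax (1/2) ltac:(lra)).
  assert (Ht0' : 0 < t0 < 1).
  { split; destruct (Req_dec t0 0) as [E|E]; try (subst; lra);
    destruct (Req_dec t0 1) as [E'|E']; try (rewrite E' in *; lra); lra. }
  set (M := u t0).
  assert (HuM : forall t, 0 < t < 1 -> u t <= M) by (intros; apply Hmax; lra).
  assert (Hup0 : up t0 = 0).
  { pose proof (Hud t0 Ht0') as HD.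
    pose (pr := exist (fun l => derivable_pt_lim u t0 l) (up t0) HD : derivable_pt u t0).
    pose proof (deriv_maximum u 0 1 t0 pr ltac:(lra) ltac:(lra)) as Hdm0.
    rewrite <- Hdm0. reflexivity. intros; apply Hmax; lra. }
  assert (Hcm1 : forall t, 0 < t < 1 -> cmin <= c t) by (intros; apply Hcm'; lra).
  assert (Hdm1 : forall t, 0 < t < 1 -> dmin <= d t) by (intros; apply Hdm'; lra).
  assert (HMpos : 0 < M) by (unfold M; lra).
  assert (Heps : 0 <= lam * K / dmin <= e0).
  { split. apply Rmult_le_pos. apply Rmult_le_pos; lra. left; apply Rinv_0_lt_compat; lra.
    destruct Hlam as [Hl1 Hl2].
    apply (Rmult_lt_compat_r (K / dmin)) in Hl2. 2: apply Rdiv_lt_0_compat; lra.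
    replace (e0 * dmin / K * (K / dmin)) with e0 in Hl2 by (field; lra).
    unfold Rdiv in *. lra. }
  pose proof (Rmin_l eL eR). pose proof (Rmin_r eL eR). change (Rmin eL eR) with e0 in H, H0.
  destruct (Rle_lt_dec t0 (1/2)) as [Hl|Hr].
  - pose proof (left_side phi psi1 psi1inv c d h f u up wp lam K cmin dmin M t0 Hphi HA3' Hinc Hpsi1inv
      Hcm Hcm1 Hdm Hdm1 HK HKf (proj1 Hlam) Hh Hhnn Hud Hupc Hwd Hwpc Heq Hpos HuM Ht0' eq_refl Hup0 Hl) as HL.
    destruct (Hucont 0 ltac:(lra) (M/4) ltac:(lra)) as [dl [Hdl Hcl]].
    pose proof (Rmin_l (dl/2) (t0/2)). pose proof (Rmin_r (dl/2) (t0/2)).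
    set (e := Rmin (dl/2) (t0/2)) in *.
    assert (He : 0 < e) by (apply Rmin_pos; lra).
    specialize (Hcl e ltac:(cbv beta; lra)). rewrite Hu0, Rminus_0_r, Rminus_0_r in Hcl.
    specialize (Hcl ltac:(rewrite Rabs_pos_eq; lra)).
    specialize (HL e ltac:(lra)).
    specialize (HsL (lam * K / dmin) e ltac:(lra) ltac:(lra)).
    assert (M / cmin * RInt (fun s => psi1inv (lam * K / dmin * RInt h s (1 / 2))) e (1 / 2) <= M / cmin * (cmin/2)).
    { apply Rmult_le_compat_l; auto. left; apply Rdiv_lt_0_compat; lra. }
    replace (M / cmin * (cmin / 2)) with (M/2) in H3 by (field; lra).
    apply Rabs_def2 in Hcl. lra.
  - pose proof (right_side phi psi1 psi1inv c d h f u up wp lam K cmin dmin M t0 Hphi HA3' Hinc Hpsi1inv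
      Hcm Hcm1 Hdm Hdm1 HK HKf (proj1 Hlam) Hh Hhnn Hud Hupc Hwd Hwpc Heq Hpos HuM Ht0' eq_refl Hup0 ltac:(lra)) as HR.
    destruct (Hucont 1 ltac:(lra) (M/4) ltac:(lra)) as [dl [Hdl Hcl]].
    set (e := 1 - Rmin (dl/2) ((1 - t0)/2)).
    pose proof (Rmin_l (dl/2) ((1-t0)/2)). pose proof (Rmin_r (dl/2) ((1-t0)/2)).
    assert (He : 0 < Rmin (dl/2) ((1-t0)/2)) by (apply Rmin_pos; lra).
    specialize (Hcl e ltac:(cbv beta; unfold e; lra)). rewrite Hu1, Rminus_0_r in Hcl.
    specialize (Hcl ltac:(unfold e; rewrite Rabs_left; lra)).
    specialize (HR e ltac:(unfold e; lra)).
    specialize (HsR (lam * K / dmin) e ltac:(lra) ltac:(unfold e; lra)).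
    assert (M / cmin * RInt (fun s => psi1inv (lam * K / dmin * RInt h (1 / 2) s)) (1/2) e <= M / cmin * (cmin/2)).
    { apply Rmult_le_compat_l; auto. left; apply Rdiv_lt_0_compat; lra. }
    replace (M / cmin * (cmin / 2)) with (M/2) in H3 by (field; lra).
    apply Rabs_def2 in Hcl. lra.
Qed.
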